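(* There is no constant $k$ such that every graph is a $k$-interval-PCG.
   Context: All trees are unrooted with edges weighted by nonnegative reals; $d_T(u,v)$ is the weight of the path between leaves $u,v$ of $T$. A graph $G$ is a $k$-interval-PCG if there exist a tree $T$ whose leaf set is $V(G)$ and $k$ pairwise disjoint intervals $I_1,\ldots,I_k$ of nonnegative reals such that $\{u,v\}\in E(G)$ iff $d_T(u,v)\in I_i$ for some $i$. *)

(* Defs.v *)
From HB Require Import structures.
From mathcomp Require Import all_boot all_order all_algebra.
From mathcomp Require Import reals.
Set Implicit Arguments. Unset Strict Implicit. Unset Printing Implicit Defensive.
Import Order.TTheory GRing.Theory Num.Theory.
Local Open Scope ring_scope.

(* A path from u is given (ssreflect convention) by the list p of
   the nodes following u; it ends at last u p. *)
Definition simple_path (N : finType) (adj : rel N) (u v : N) (p : seq N) :=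
  [&& path adj u p, last u p == v & uniq (u :: p)].

Definition is_tree (N : finType) (adj : rel N) : Prop :=
  symmetric adj /\ irreflexive adj /\
  forall u v : N, exists! p : seq N, simple_path adj u v p.

(* leaves: nodes of degree at most one (degree 0 only in a one-node tree) *)
Definition is_leaf (N : finType) (adj : rel N) (x : N) : bool :=
  (#|[set y | adj x y]| <= 1)%N.

Definition path_weight (R : realType) (N : finType) (w : N -> N -> R)
  (u : N) (p : seq N) : R :=
  \sum_(x <- pairmap w u p) x.

Definition k_interval_PCG (R : realType) (k : nat) (T : finType) (E : rel T)
  : Prop :=
  exists (N : finType) (adj : rel N) (w : N -> N -> R) (f : T -> N)
         (I : 'I_k -> interval R),
    is_tree adj /\
    (forall x y, adj x y -> 0 <= w x y /\ w x y = w y x) /\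
    injective f /\
    (forall x : N, is_leaf adj x <-> exists t, f t = x) /\
    (forall i x, x \in I i -> 0 <= x) /\
    (forall i j, i != j -> forall x, ~ (x \in I i /\ x \in I j)) /\
    (forall u v, u != v ->
       (E u v <-> exists p, simple_path adj (f u) (f v) p /\
                    exists i, path_weight w (f u) p \in I i)).

(* Main.v *)
Require Import Defs.
From HB Require Import structures.
From mathcomp Require Import all_boot all_order all_algebra.
From mathcomp Require Import reals.
From mathcomp Require Import zify.
From Stdlib Require Import Lia.
Set Implicit Arguments. Unset Strict Implicit. Unset Printing Implicit Defensive.
Import Order.TTheory GRing.Theory Num.Theory.

Section Tree.
Variables (N : finType) (adj : rel N).
Hypothesis adj_sym : symmetric adj.
Hypothesis uniqP : forall u v : N, exists! p, simple_path adj u v p.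

Lemma ex_path u v : exists p, simple_path adj u v p.
Proof. by have [p [Hp _]] := uniqP u v; exists p. Qed.

Definition pth u v := xchoose (ex_path u v).

Lemma pthP u v : simple_path adj u v (pth u v).
Proof. exact: xchooseP. Qed.

Lemma pth_uniq u v p : simple_path adj u v p -> p = pth u v.
Proof.
move=> Hp; have [q [_ Hq]] := uniqP u v.
by rewrite -(Hq _ Hp) -(Hq _ (pthP u v)).
Qed.

Lemma pth_nil c : pth c c = [::].
Proof. by rewrite -(@pth_uniq c c [::]) // /simple_path /= eqxx. Qed.

Lemma pth_last u v : last u (pth u v) = v.
Proof. by have /and3P[_ /eqP -> _] := pthP u v. Qed.

Lemma prefix_simple c z p y : simple_path adj c z p -> y \in p ->
  simple_path adj c y (take (index y p).+1 p).
Proof.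
case/and3P=> Hpa _ Hu Hy; apply/and3P; split.
- by move: Hpa; rewrite -{1}(cat_take_drop (index y p).+1 p) cat_path => /andP[].
- have Hlt : index y p < size p by rewrite index_mem.
  rewrite (last_nth c) size_takel //=.
  by rewrite nth_take // nth_index.
- move: Hu; rewrite /= => /andP[Hc Hu]; rewrite take_uniq // andbT.
  by apply: contra Hc => /mem_take.
Qed.

Lemma head_take_nil (p : seq N) c n : p != [::] -> head c (take n.+1 p) = head c p.
Proof. by case: p. Qed.

Lemma head_same c x z y : y \in pth c x -> y \in pth c z ->
  head c (pth c x) = head c (pth c z).
Proof.
move=> Hx Hz.
have e1 := pth_uniq (prefix_simple (pthP c x) Hx).
have e2 := pth_uniq (prefix_simple (pthP c z) Hz).
rewrite -(@head_take_nil _ c (index y (pth c x))); last by case: (pth c x) Hx.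
rewrite -(@head_take_nil (pth c z) c (index y (pth c z))); last by case: (pth c z) Hz.
by rewrite e1 e2.
Qed.

Lemma last_rev_belast (y : N) p : last (last y p) (rev (belast y p)) = y.
Proof.
case: p => [|z p] //=.
by rewrite rev_cons last_rcons.
Qed.

Section Weight.
Variables (R : realType) (w : N -> N -> R).
Hypothesis w_sym : forall x y, adj x y -> w x y = w y x.

Definition D u v := path_weight w u (pth u v).

Lemma pw_cons x y p : path_weight w x (y :: p) = (w x y + path_weight w y p)%R.
Proof. by rewrite /path_weight /= big_cons. Qed.

Lemma pw_cat x s1 s2 : path_weight w x (s1 ++ s2) =
  (path_weight w x s1 + path_weight w (last x s1) s2)%R.
Proof. by rewrite /path_weight pairmap_cat big_cat. Qed.

Lemma pw_rev c p : path adj c p ->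
  path_weight w (last c p) (rev (belast c p)) = path_weight w c p.
Proof.
elim: p c => [|y p IH] c //= /andP[Hcy Hp].
rewrite rev_cons -cats1 pw_cat IH // last_rev_belast.
rewrite /path_weight /= !big_cons big_nil GRing.addr0 GRing.addrC.
by rewrite w_sym // adj_sym.
Qed.

Lemma D_split c x y : head c (pth c x) != head c (pth c y) ->
  D x y = (D c x + D c y)%R.
Proof.
move=> Hh.
set pa := pth c x; set pb := pth c y.
have /and3P[Hpa /eqP Hla Hua] := pthP c x.
have /and3P[Hpb /eqP Hlb Hub] := pthP c y.
have Hlr : last x (rev (belast c pa)) = c.
  by rewrite -/pa -Hla last_rev_belast.
have Hq : simple_path adj x y (rev (belast c pa) ++ pb).
  apply/and3P; split.
  - rewrite cat_path Hlr Hpb andbT -Hla rev_path.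
    by rewrite (@eq_path _ _ adj) // => a b; rewrite adj_sym.
  - by rewrite last_cat Hlr Hlb.
  - rewrite -cat_cons.
    have -> : x :: rev (belast c pa) = rev (c :: pa).
      by rewrite (lastI c pa) rev_rcons Hla.
    rewrite cat_uniq rev_uniq Hua /=.
    move: Hub => /= /andP[Hc Hub]; rewrite Hub andbT.
    apply/hasPn => z Hz; rewrite mem_rev in_cons negb_or.
    apply/andP; split.
      by apply/eqP => Ezc; move: Hc; rewrite -{1}Ezc => /negP; apply.
    apply/negP => Hza; apply: (negP Hh); apply/eqP.
    exact: head_same Hza Hz.
rewrite /D -(pth_uniq Hq) pw_cat Hlr -/pa -/pb -Hla pw_rev //.
Qed.

End Weight.

Hypothesis adj_irr : irreflexive adj.

Lemma pth_head_adj c v y s : pth c v = y :: s -> adj c y.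
Proof. by move=> E; have /and3P[] := pthP c v; rewrite E /= => /andP[]. Qed.

Lemma pth_one c y : adj c y -> pth c y = [:: y].
Proof.
move=> Hcy; symmetry; apply: pth_uniq; rewrite /simple_path /= Hcy eqxx /=.
rewrite in_cons in_nil orbF !andbT.
by apply/negP => /eqP E; rewrite E adj_irr in Hcy.
Qed.

Lemma head_pth_ne c v : pth c v != [::] -> head c (pth c v) != c.
Proof.
case E: (pth c v) => [|y s] // _ /=.
by apply/negP => /eqP Eyc; have := pth_head_adj E; rewrite Eyc adj_irr.
Qed.

Lemma pth_step c y v : adj c y -> 
  size (pth y v) + (head c (pth c v) == y) = size (pth c v) + (head c (pth c v) != y).
Proof.
move=> Hcy.
case: eqP => Hh /=.
- case E: (pth c v) Hh => [|z s] /=.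
    by move=> Eyc; rewrite -Eyc adj_irr in Hcy.
  move=> Ezy; subst z.
  have /and3P[Hp /eqP Hl Hu] := pthP c v; rewrite E in Hp Hl Hu.
  have -> : pth y v = s.
    symmetry; apply: pth_uniq; apply/and3P; split.
    - by move: Hp => /= /andP[].
    - by rewrite /= in Hl; rewrite Hl.
    - by move: Hu => /= /andP[].
  by rewrite addn1 addn0.
- have Hyc : y != c by apply/negP => /eqP Eyc; rewrite Eyc adj_irr in Hcy.
  have -> : pth y v = c :: pth c v.
    symmetry; apply: pth_uniq.
    have /and3P[Hp /eqP Hl Hu] := pthP c v.
    apply/and3P; split.
    - by rewrite /= adj_sym Hcy.
    - by rewrite /= Hl.
    - rewrite -[c :: pth c v]/(c :: pth c v) cons_uniq Hu andbT in_cons negb_or Hyc /=.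
      apply/negP => Hy; apply: Hh.
      have := @head_same c v y y Hy; rewrite pth_one // in_cons eqxx /= => H.
      by rewrite H.
  by rewrite addn0 addn1.
Qed.

Lemma sum_bool_card (V : finType) (X : {set V}) (Q : pred V) :
  \sum_(b in X) (Q b : nat) = #|[set b in X | Q b]|.
Proof.
have -> : #|[set b in X | Q b]| = \sum_(b | (b \in X) && Q b) 1.
  by rewrite -sum1_card; apply: eq_bigl => b; rewrite inE.
rewrite big_mkcondr /=; apply: eq_bigr => b _.
by case: (Q b).
Qed.

Section Centroid.
Variables (V : finType) (f : V -> N).
Hypothesis f_inj : injective f.

Definition part c a := head c (pth c (f a)).

Definition Phi (X : {set V}) c := \sum_(a in X) size (pth c (f a)).

Lemma centroid (X : {set V}) : (2 <= #|X|)%N -> exists c,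
  forall a, a \in X -> (2 * #|[set b in X | part c b == part c a]| <= #|X|)%N.
Proof.
move=> H2.
have [a0 Ha0] : exists a0, a0 \in X.
  by apply/set0Pn; rewrite -card_gt0; apply: leq_trans H2.
have [c _ Hmin] := @arg_minnP N (f a0) xpredT (Phi X) erefl.
exists c => a Ha.
rewrite leqNgt; apply/negP => Hgt.
set y := part c a in Hgt.
have [Eyc | Hyc] := eqVneq y c.
- have : (#|[set b in X | part c b == y]| <= 1)%N.
    rewrite leqNgt; apply/negP => /card_gt1P [b1 [b2 [Hb1 Hb2 Hne]]].
    move: Hb1 Hb2; rewrite !inE Eyc => /andP[_ E1] /andP[_ E2].
    have F : forall b, part c b == c -> f b = c.
      move=> b; rewrite /part; case E: (pth c (f b)) => [|z s] /=.
        by move=> _; have := pth_last c (f b); rewrite E.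
      move=> /eqP Ezc; subst z.
      by have := pth_head_adj E; rewrite adj_irr.
    by move: Hne; rewrite (f_inj (etrans (F _ E1) (esym (F _ E2)))) eqxx.
  move=> H1; move: Hgt; rewrite -/y; rewrite Eyc in H1 *; move: H1 H2; lia.
- have Hcy : adj c y.
    move: Hyc; rewrite /y /part; case E: (pth c (f a)) => [|z s] /=.
      by rewrite eqxx.
    by move=> _; apply: pth_head_adj E.
  have Hs : Phi X y + #|[set b in X | part c b == y]| =
            Phi X c + #|[set b in X | part c b != y]|.
    rewrite /Phi -!sum_bool_card -!big_split /=.
    by apply: eq_bigr => b _; rewrite /part pth_step.
  have Hsum : #|[set b in X | part c b == y]| + #|[set b in X | part c b != y]| = #|X|.
    rewrite -!sum_bool_card -big_split /= -sum1_card.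
    by apply: eq_bigr => b _; case: (part c b == y).
  have := Hmin y isT; move: Hgt Hs Hsum; lia.
Qed.

End Centroid.
End Tree.


Lemma itv_convex (R : realDomainType) (I : interval R) (x y z : R) :
  x \in I -> z \in I -> (x <= y)%R -> (y <= z)%R -> y \in I.
Proof.
case: I => bl br; rewrite !itv_boundlr => /andP[H1 _] /andP[_ H2] Hxy Hyz.
apply/andP; split.
  by apply: le_trans H1 _; rewrite leBSide /=.
by apply: le_trans H2; rewrite leBSide /=.
Qed.

Section Ranks.
Variables (R : realType) (V : finType) (g : V -> R).

Definition rank a := #|[set u | (g u < g a)%R]|.

Lemma rank_le a : (rank a <= #|V|)%N.
Proof. exact: max_card. Qed.

Lemma rank_mono u v : (g u <= g v)%R -> (rank u <= rank v)%N.
Proof.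
move=> H; apply: subset_leq_card; apply/subsetP => x; rewrite !inE => Hx.
exact: lt_le_trans Hx H.
Qed.

Lemma rank_smono u v : (g u < g v)%R -> (rank u < rank v)%N.
Proof.
move=> H; apply: proper_card; apply/properP; split.
  apply/subsetP => x; rewrite !inE => Hx; exact: lt_trans Hx H.
by exists u; rewrite !inE // ltxx.
Qed.

Lemma rank_refl u v : (rank u <= rank v)%N -> (g u <= g v)%R.
Proof.
move=> H; rewrite leNgt; apply/negP => /rank_smono; rewrite ltnNge H.
by [].
Qed.

Lemma cut (P : pred R) :
  (forall x y z, P x -> P z -> (x <= y)%R -> (y <= z)%R -> P y) ->
  exists lo hi : 'I_#|V|.+1, forall b, P (g b) = (lo <= rank b <= hi)%N.
Proof.
move=> Pconv.
case: (pickP [pred b | P (g b)]) => [b0 Hb0|H0]; last first.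
  case: (pickP (@predT V)) => [b1 _|HV].
    have HV : (0 < #|V|)%N by apply/card_gt0P; exists b1.
    exists (inord 1), ord0 => b; have := H0 b; rewrite /= => ->; rewrite inordK; last by rewrite ltnS.
    by rewrite andbC leqn0; case: eqP => //= ->.
  by exists ord0, ord0 => b; have := HV b.
have [bmin Hbmin Hmin] := @arg_minnP V b0 [pred b | P (g b)] rank Hb0.
have [bmax Hbmax Hmax] := @arg_maxnP V b0 [pred b | P (g b)] rank Hb0.
exists (inord (rank bmin)), (inord (rank bmax)) => b.
rewrite !inordK ?ltnS ?rank_le //.
apply/idP/idP.
  by move=> Hb; rewrite Hmin //=; apply: Hmax.
case/andP => H1 H2.
apply: (Pconv _ _ _ Hbmin Hbmax); exact: rank_refl.
Qed.

End Ranks.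

Lemma first_change (P : nat -> bool) L : P 0 -> ~~ P L ->
  exists l, (l < L)%N /\ P l /\ ~~ P l.+1.
Proof.
move=> H0; elim: L => [|L IH] HL; first by rewrite H0 in HL.
case HPL: (P L).
  by exists L; split => //.
have [l [Hl [Hp Hnp]]] := IH (negbT HPL).
by exists l; split => //; apply: ltnW.
Qed.

Section Decomp.
Variables (R : realType) (V N : finType) (c0 : N) (part : N -> V -> N)
  (h0 : N -> V -> R) (d : V -> V -> R).
Hypothesis Hcent : forall X : {set V}, (2 <= #|X|)%N -> exists c,
  forall a, a \in X -> (2 * #|[set b in X | part c b == part c a]| <= #|X|)%N.
Hypothesis Hsplit : forall c a b, part c a != part c b -> d a b = (h0 c a + h0 c b)%R.

Definition good (X : {set V}) c :=
  [forall a in X, (2 * #|[set b in X | part c b == part c a]| <= #|X|)%N].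

Definition cent X := odflt c0 [pick c | good X c].

Lemma cent_ok (X : {set V}) : (2 <= #|X|)%N -> forall a, a \in X ->
  (2 * #|[set b in X | part (cent X) b == part (cent X) a]| <= #|X|)%N.
Proof.
move=> H2; rewrite /cent; case: pickP => [c Hc|H0] /=.
  by move=> a Ha; move/forall_inP: Hc; apply.
have [c Hc] := Hcent H2.
by have := H0 c; rewrite /good; move/negP; case; apply/forall_inP.
Qed.

Fixpoint cl l a : {set V} :=
  if l is l'.+1 then
    [set b in cl l' a | part (cent (cl l' a)) b == part (cent (cl l' a)) a]
  else setT.

Lemma cl_self l a : a \in cl l a.
Proof. by elim: l => [|l IH] /=; rewrite ?inE ?IH ?eqxx. Qed.

Lemma cl_eq l a b : b \in cl l a -> cl l b = cl l a.
Proof.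
elim: l a b => [|l IH] a b //=.
rewrite inE => /andP[Hb /eqP Hp].
rewrite (IH _ _ Hb) Hp.
apply/setP => x; rewrite !inE.
by [].
Qed.

Lemma cl_sub l a : cl l.+1 a \subset cl l a.
Proof. by apply/subsetP => x; rewrite /= inE => /andP[]. Qed.

Lemma cl_size l a : (#|cl l a| <= 1)%N \/ (2 ^ l * #|cl l a| <= #|V|)%N.
Proof.
elim: l => [|l IH].
  by right; rewrite /= cardsT expn0 mul1n.
have Hs := subset_leq_card (cl_sub l a).
case: (leqP #|cl l a| 1) => H1.
  by left; apply: leq_trans Hs H1.
right; case: IH => IH; first by move: IH H1; lia.
have := cent_ok H1 (cl_self l a).
rewrite /= -/(cl l.+1 a) => H2.
  rewrite expnS (mulnC 2) -mulnA.
  by apply: leq_trans IH; rewrite leq_mul2l H2 orbT.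
Qed.

Lemma cl_sep L a b : a != b -> (#|V| < 2 ^ L)%N ->
  exists l, (l < L)%N /\ b \in cl l a /\ b \notin cl l.+1 a.
Proof.
move=> Hab HL.
apply: (@first_change (fun l => b \in cl l a)); first by rewrite inE.
apply/negP => Hb.
have Hgt1 : (1 < #|cl L a|)%N.
  apply/card_gt1P; exists a, b; split => //; exact: cl_self.
case: (cl_size L a) => H; first by move: H Hgt1; lia.
have : (2 ^ L * 2 <= 2 ^ L * #|cl L a|)%N by rewrite leq_mul2l Hgt1 orbT.
move: H HL; lia.
Qed.

Definition hh l a := h0 (cent (cl l a)) a.

Lemma sep_split l a b : b \in cl l a -> b \notin cl l.+1 a ->
  d a b = (hh l a + hh l b)%R.
Proof.
move=> Hb Hnb.
rewrite /hh (cl_eq Hb); apply: Hsplit.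
move: Hnb; rewrite /= inE Hb /=.
by rewrite eq_sym.
Qed.

Definition lab l a := odflt a [pick z in cl l a].

Lemma lab_in l a : lab l a \in cl l a.
Proof.
rewrite /lab; case: pickP => [z Hz|H] //=.
by have := H a; rewrite cl_self.
Qed.

Lemma lab_eq l a b : (lab l a == lab l b) = (b \in cl l a).
Proof.
apply/idP/idP.
  move=> /eqP E.
  have H1 := lab_in l a; have H2 := lab_in l b; rewrite E in H1.
  by rewrite -(cl_eq H1) (cl_eq H2) cl_self.
move=> Hb; rewrite /lab (cl_eq Hb).
case: pickP => [z Hz|H] //=.
by have := H a; rewrite cl_self.
Qed.

End Decomp.


Lemma cube_pow j : (j + 17) ^ 3 <= 2 ^ (j + 15).
Proof.
elim: j => [|j IH]; first by [].
have H1 : (j.+1 + 17) ^ 3 <= 2 * (j + 17) ^ 3.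
  rewrite !expnS expn0 !muln1.
  have h1 := leq0n (j * j * j); have h2 := leq0n (j*j); nia.
have H2 : 2 ^ (j.+1 + 15) = 2 * 2 ^ (j + 15) by rewrite addSn expnS.
lia.
Qed.

Lemma arith k : 2 * ((4 * k + 21) + 2) * (2 * (4 * k + 21) + 5 + 2 * k * ((4 * k + 21) + 2)) < 2 ^ (4 * k + 21).
Proof.
have := cube_pow (4 * k + 6).
have -> : 4 * k + 6 + 15 = 4 * k + 21 by lia.
move: (2 ^ (4 * k + 21)) => P.
rewrite !expnS expn0 !muln1 => H.
have E : 4 * k + 6 + 17 = 4 * k + 23 by lia.
rewrite E in H.
set t := 4 * k + 23 in H.
have Ht : 4 * k + 21 + 2 = t by rewrite /t; lia.
rewrite Ht.
have : 2 * t * (2 * t + 1 + 2 * k * t) < t * (t * t).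
  rewrite /t; nia.
have -> : 2 * (4 * k + 21) + 5 = 2 * t + 1 by rewrite /t; lia.
lia.
Qed.


Section Main.
Variables (R : realType) (k : nat) (V : finType) (L : nat).

Definition Code := ({ffun 'I_L.+1 -> {ffun V -> V}} *
  {ffun 'I_L -> {ffun V -> 'I_#|V|.+1}} *
  {ffun 'I_L -> {ffun V -> {ffun 'I_k -> 'I_#|V|.+1 * 'I_#|V|.+1}}})%type.

Definition dec (c : Code) (a b : V) : bool :=
  [exists l : 'I_L, (c.1.1 (inord l) a == c.1.1 (inord l) b) &&
     (c.1.1 (inord l.+1) a != c.1.1 (inord l.+1) b) &&
     [exists i : 'I_k, ((c.2 l a i).1 <= c.1.2 l b <= (c.2 l a i).2)%N]].

Lemma represent (E : rel V) : (#|V| < 2 ^ L)%N -> k_interval_PCG R k E ->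
  exists c : Code, forall a b, a != b -> E a b = dec c a b.
Proof.
move=> HL [N [adj [w [f [I [[Hsym [Hirr Huniq]] [Hw [Hinj [_ [_ [_ Hedge]]]]]]]]]]].
case: (pickP (@predT V)) => [a0 _|HV]; last first.
  exists ([ffun l => [ffun a => a]], [ffun l => [ffun b => ord0]],
          [ffun l => [ffun a => [ffun i => (ord0, ord0)]]]).
  by move=> a; have := HV a.
set c0 := f a0.
set prt := part Huniq f.
set h0 := fun c a => D Huniq w c (f a).
set d := fun a b => D Huniq w (f a) (f b).
have Hcent := centroid Hsym Huniq Hirr Hinj.
have Hsplit : forall c a b, prt c a != prt c b -> d a b = (h0 c a + h0 c b)%R.
  move=> c a b H; exact: (D_split Hsym (fun x y H => (Hw x y H).2) H).
have HE : forall a b, a != b -> E a b = [exists i : 'I_k, d a b \in I i].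
  move=> a b Hab; apply/idP/existsP.
    case/(Hedge _ _ Hab) => p [Hp [i Hi]]; exists i.
    by rewrite /d /D -(pth_uniq Huniq Hp).
  case=> i Hi; apply/(Hedge _ _ Hab); exists (pth Huniq (f a) (f b)).
  by split; [exact: pthP Huniq _ _ | exists i].
set hf := hh c0 prt h0.
pose cutf l a i := odflt (ord0, ord0) [pick p : 'I_#|V|.+1 * 'I_#|V|.+1 |
   [forall b, ((hf l a + hf l b)%R \in I i) == (p.1 <= rank (hf l) b <= p.2)%N]].
have cutf_ok : forall l a i b, ((hf l a + hf l b)%R \in I i) =
     ((cutf l a i).1 <= rank (hf l) b <= (cutf l a i).2)%N.
  move=> l a i; rewrite /cutf; case: pickP => [p /forallP Hp | H0] /=.
    by move=> b; apply/eqP: (Hp b).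
  have Pconv : forall x y z, (hf l a + x)%R \in I i -> (hf l a + z)%R \in I i ->
      (x <= y)%R -> (y <= z)%R -> (hf l a + y)%R \in I i.
    move=> x y z Hx Hz Hxy Hyz; apply: (itv_convex Hx Hz); by rewrite lerD2l.
  have [lo [hi Hc]] := cut (hf l) Pconv.
  by have := H0 (lo, hi); move/negP; case; apply/forallP => b /=; rewrite Hc.
exists ([ffun l : 'I_L.+1 => [ffun a => lab c0 prt l a]],
        [ffun l : 'I_L => [ffun b => inord (rank (hf l) b)]],
        [ffun l : 'I_L => [ffun a => [ffun i => cutf l a i]]]).
move=> a b Hab; rewrite HE // /dec /=.
have Hsep : forall l : 'I_L,
   ([ffun l0 : 'I_L.+1 => [ffun a1 => lab c0 prt l0 a1]] (inord l) a ==
    [ffun l0 : 'I_L.+1 => [ffun a1 => lab c0 prt l0 a1]] (inord l) b) &&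
   ([ffun l0 : 'I_L.+1 => [ffun a1 => lab c0 prt l0 a1]] (inord l.+1) a !=
    [ffun l0 : 'I_L.+1 => [ffun a1 => lab c0 prt l0 a1]] (inord l.+1) b) =
   (b \in cl c0 prt l a) && (b \notin cl c0 prt l.+1 a).
  move=> l; rewrite !ffunE !inordK ?lab_eq //.
  - by rewrite ltnS.
  - by rewrite ltnS ltnW.
have Hcut : forall l : 'I_L, b \in cl c0 prt l a -> b \notin cl c0 prt l.+1 a ->
   [exists i : 'I_k, ((([ffun l0 : 'I_L => [ffun a1 => [ffun i0 => cutf l0 a1 i0]]] l a i).1 <=
      [ffun l0 : 'I_L => [ffun b0 => (inord (rank (hf l0) b0) : 'I_#|V|.+1)]] l b)%N &&
      ([ffun l0 : 'I_L => [ffun b0 => (inord (rank (hf l0) b0) : 'I_#|V|.+1)]] l b <=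
      ([ffun l0 : 'I_L => [ffun a1 => [ffun i0 => cutf l0 a1 i0]]] l a i).2)%N)]
   = [exists i : 'I_k, d a b \in I i].
  move=> l H1 H2; rewrite (sep_split Hsplit H1 H2) -/hf.
  apply: eq_existsb => i; rewrite !ffunE inordK ?ltnS ?rank_le //.
apply/idP/existsP.
  move=> Hd.
  have [l [Hl [H1 H2]]] := cl_sep c0 Hcent Hab HL.
  exists (Ordinal Hl); rewrite Hsep /= H1 H2 /=.
  by rewrite Hcut.
case=> l /andP[Hs Hc].
rewrite Hsep in Hs; case/andP: Hs => H1 H2.
by rewrite -(Hcut l H1 H2).
Qed.

End Main.


Lemma pow_mono a b e : (a <= b)%N -> (a ^ e <= b ^ e)%N.
Proof. by move=> H; elim: e => // e IH; rewrite !expnS leq_mul. Qed.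

Definition Eg n (g : {ffun 'I_n * 'I_n -> bool}) : rel ('I_n + 'I_n)%type :=
  fun a b => match a, b with
             | inl i, inr j => g (i, j)
             | inr j, inl i => g (i, j)
             | _, _ => false end.

Lemma Eg_sym n g : symmetric (@Eg n g).
Proof. by case=> [i|j] [i'|j']. Qed.

Lemma Eg_irr n g : irreflexive (@Eg n g).
Proof. by case. Qed.

Theorem corollary1 (R : realType) :
  ~ exists k : nat, forall (T : finType) (E : rel T),
      symmetric E -> irreflexive E -> k_interval_PCG R k E.
Proof.
case=> k Hk.
set m := 4 * k + 21.
set n := 2 ^ m.
pose V := ('I_n + 'I_n)%type.
have HV : #|{: V}| = 2 ^ m.+1 by rewrite card_sum card_ord expnS -/n; lia.
have HL : (#|{: V}| < 2 ^ (m + 2))%N.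
  by rewrite HV ltn_exp2l // addn2.
set L := m + 2 in HL.
pose Phi (c : Code k V L) : {ffun 'I_n * 'I_n -> bool} :=
  [ffun ij => dec c (inl ij.1) (inr ij.2)].
have Hsurj : forall g, exists c, Phi c = g.
  move=> g.
  have [c Hc] := represent HL (Hk _ _ (@Eg_sym n g) (@Eg_irr n g)).
  exists c; apply/ffunP => -[i j]; rewrite ffunE /= -Hc //.
have Hcard : (#|{: {ffun 'I_n * 'I_n -> bool}}| <= #|{: Code k V L}|)%N.
  have HS : Phi @: [set: Code k V L] = setT.
    apply/setP => g; rewrite !inE.
    by have [c <-] := Hsurj g; apply/imsetP; exists c; rewrite ?inE.
  have := leq_imset_card Phi [set: Code k V L]; rewrite HS !cardsT; exact.
move: Hcard; apply/negP; rewrite -ltnNge.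
have C1 : #|{: {ffun 'I_n * 'I_n -> bool}}| = 2 ^ (n * n) by rewrite card_ffun card_bool card_prod !card_ord.
rewrite C1 /Code !card_prod !card_ffun !card_prod !card_ord HV.
have HN : 2 ^ m.+1 = 2 * n by rewrite expnS.
have HX1 : (2 ^ m.+1 <= 2 ^ (m + 2))%N by rewrite leq_exp2l // addn2.
have E4 : 2 ^ (m + 2) = 4 * n by rewrite addn2 !expnS mulnA.
have Hn0 : (0 < n)%N by rewrite expn_gt0.
have HX2 : ((2 ^ m.+1).+1 <= 2 ^ (m + 2))%N by rewrite E4 HN; lia.
apply: (@leq_ltn_trans (((2 ^ (m + 2)) ^ 2 ^ m.+1) ^ L.+1 * ((2 ^ (m + 2)) ^ 2 ^ m.+1) ^ L *
  ((((2 ^ (m + 2)) * (2 ^ (m + 2))) ^ k) ^ 2 ^ m.+1) ^ L)).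
  by rewrite !leq_mul ?pow_mono // leq_mul.
rewrite -expnD -!expnM -!expnD -!expnM -!expnD ltn_exp2l //.
have Ha := arith k; rewrite -/m -/n in Ha.
rewrite HN /L.
rewrite expnD -/n.
have E : (m + 2) * (2 * n * ((m + 2).+1 + (m + 2))) +
  (m + 2 + (m + 2)) * (k * (2 * n * (m + 2))) =
  n * (2 * (m + 2) * (2 * m + 5 + 2 * k * (m + 2))).
  clear -m; lia.
by rewrite E ltn_pmul2l.
Qed.
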